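(* Let $\mathfrak{g}$ be a finite-dimensional real Lie algebra with linear bivector $\bar\alpha^{ij}=\tfrac12c_k^{ij}X^k$. Every graph $\Gamma\in G_n$ whose operator $B_{\Gamma,\bar\alpha}$ is not identically zero is either a loop graph or a Sym-admissible graph. Thus the bi-differential operators occurring in Kontsevich's quantization of $\mathfrak{g}^*$ are of two types: those corresponding to loop graphs and those corresponding to Sym-admissible graphs.
   Context: Basis $X^1,\ldots,X^d$ of $\mathfrak{g}$ with $[X^i,X^j]=c_k^{ij}X^k$; the $X^i$ are linear coordinates on $\mathfrak{g}^*$, $\partial_i=\partial/\partial X^i$. $G_n$: oriented labeled graphs with vertex set $\{1,\ldots,n\}\cup\{X,Y\}$ and $2n$ edges, exactly two ordered edges $e_k^1,e_k^2$ starting at each aerial vertex $k$ and ending at vertices other than $k$, none starting at $X,Y$. $B_{\Gamma,\bar\alpha}(f,g)=\sum_{I:E_\Gamma\to\{1,\ldots,d\}}\Big[\prod_{k=1}^n\Big(\prod_{e=( *,k)}\partial_{I(e)}\Big)\bar\alpha^{I(e_k^1)I(e_k^2)}\Big]\Big(\prod_{e=( *,X)}\partial_{I(e)}\Big)f\,\Big(\prod_{e=( *,Y)}\partial_{I(e)}\Big)g$. Kontsevich's quantization of $\mathfrak{g}^*$ is $f\star g=\sum_n\epsilon^n\sum_{\Gamma\in G_n}w_K(\Gamma)B_{\Gamma,\bar\alpha}(f,g)$ for certain numerical weights $w_K(\Gamma)$. A loop graph is one containing a directed cycle. A graph is Sym-admissible if it is the graph with no edges, or if, after redirecting each edge ending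 at $X$ (resp. $Y$) to its own new leaf labeled $X$ (resp. $Y$), it becomes a disjoint union of rooted binary trees whose internal nodes are the aerial vertices (edges directed from a node to its two children) and whose leaves are the new $X/Y$ leaves. *)

(* Defs.v *)
From HB Require Import structures.
From mathcomp Require Import all_boot all_order all_algebra.
From mathcomp Require Import reals.
From mathcomp Require Import mpoly.
Set Implicit Arguments. Unset Strict Implicit. Unset Printing Implicit Defensive.
Import Order.TTheory GRing.Theory Num.Theory.
Local Open Scope ring_scope.

(** * Lie algebra structure constants
   A Lie algebra g with basis X^0..X^(d-1); [c i j k] = c_k^{ij}, i.e.
   [X^i, X^j] = \sum_k c_k^{ij} X^k. *)
Definition is_lie_structure (R : realType) (d : nat)
    (c : 'I_d -> 'I_d -> 'I_d -> R) : Prop :=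
  (forall i j k, c i j k = - c j i k) /\
  (forall i j k m,
     \sum_(l < d) (c i j l * c l k m + c j k l * c l i m + c k i l * c l j m)
       = 0).

(** The linear bivector  alpha^{ij} = 1/2 c_k^{ij} X^k  on g^*, where the
    X^k are the linear coordinates on g^* (polynomial ring in d variables). *)
Definition alpha_bar (R : realType) (d : nat) (c : 'I_d -> 'I_d -> 'I_d -> R)
    (i j : 'I_d) : {mpoly R[d]} :=
  2^-1 *: \sum_(k < d) c i j k *: 'X_k.

(** * Kontsevich graphs G_n
   Vertices: aerial vertices [inl k] (k : 'I_n), and the two ground vertices
   X := [inr false], Y := [inr true].  Edges: e_k^1 = (k, false) and
   e_k^2 = (k, true), starting at aerial vertex k; [kg_tgt e] is the end
   vertex of e, which must differ from the starting vertex. *)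
Definition kvertex (n : nat) := ('I_n + bool)%type.
Definition vX {n : nat} : kvertex n := inr false.
Definition vY {n : nat} : kvertex n := inr true.

Record kgraph (n : nat) := KGraph {
  kg_tgt : {ffun 'I_n * bool -> kvertex n};
  kg_tgt_ok : forall (k : 'I_n) (b : bool), kg_tgt (k, b) != inl k
}.

Definition edges_into (n : nat) (G : kgraph n) (v : kvertex n)
  : seq ('I_n * bool) :=
  [seq e <- enum {: 'I_n * bool} | kg_tgt G e == v].

Definition derivs (R : realType) (d : nat) (s : seq 'I_d) (p : {mpoly R[d]})
  : {mpoly R[d]} :=
  foldr (fun i q => mderiv i q) p s.

Definition B_op (R : realType) (d n : nat) (c : 'I_d -> 'I_d -> 'I_d -> R)
    (G : kgraph n) (f g : {mpoly R[d]}) : {mpoly R[d]} :=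
  \sum_(I : {ffun 'I_n * bool -> 'I_d})
    ((\prod_(k < n)
        derivs [seq I e | e <- edges_into G (inl k)]
               (alpha_bar c (I (k, false)) (I (k, true))))
     * derivs [seq I e | e <- edges_into G vX] f
     * derivs [seq I e | e <- edges_into G vY] g).

(** * Loop graphs: Gamma contains a directed cycle.
   Only aerial vertices have outgoing edges, so a directed cycle consists of
   aerial vertices; [aerial_edge G k j] iff there is an edge from k to j. *)
Definition aerial_edge (n : nat) (G : kgraph n) : rel 'I_n :=
  fun k j => (kg_tgt G (k, false) == inl j) || (kg_tgt G (k, true) == inl j).

Definition loop_graph (n : nat) (G : kgraph n) : Prop :=
  exists k j : 'I_n, aerial_edge G k j && connect (aerial_edge G) j k.

(** * Sym-admissible graphs
   Rooted binary trees whose internal nodes are labelled by aerial vertices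
   and whose leaves are labelled X ([false]) or Y ([true]). *)
Inductive btree (n : nat) :=
| BLeaf of bool
| BNode of 'I_n & btree n & btree n.

Definition btree_root (n : nat) (t : btree n) : kvertex n :=
  match t with
  | BLeaf b => inr b
  | BNode k _ _ => inl k
  end.

Fixpoint btree_nodes (n : nat) (t : btree n) : seq 'I_n :=
  match t with
  | BLeaf _ => [::]
  | BNode k l r => k :: (btree_nodes l ++ btree_nodes r)
  end.

Definition is_bnode (n : nat) (t : btree n) : bool :=
  if t is BNode _ _ _ then true else false.

Fixpoint btree_fits (n : nat) (G : kgraph n) (t : btree n) : bool :=
  match t with
  | BLeaf _ => true
  | BNode k l r =>
      [&& kg_tgt G (k, false) == btree_root l,
          kg_tgt G (k, true) == btree_root r,
          btree_fits G l & btree_fits G r]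
  end.

(** Gamma is Sym-admissible: it is the graph with no edges (n = 0), or after
    splitting every edge ending at X (resp. Y) to its own new leaf, it is a
    disjoint union (forest F) of rooted binary trees whose internal nodes are
    exactly the aerial vertices (each occurring exactly once) and whose leaves
    are the new X/Y leaves. *)
Definition sym_admissible (n : nat) (G : kgraph n) : Prop :=
  n = 0%N \/
  exists F : seq (btree n),
    [/\ all (@is_bnode n) F,
        perm_eq (flatten [seq btree_nodes t | t <- F]) (enum 'I_n)
      & all (btree_fits G) F].

(* Main.v *)
Require Import Defs.
From HB Require Import structures.
From mathcomp Require Import all_boot all_order all_algebra.
From mathcomp Require Import reals.
From mathcomp Require Import mpoly.
From mathcomp Require Import zify.
Set Implicit Arguments. Unset Strict Implicit. Unset Printing Implicit Defensive.
Lemma edgeP n (G : kgraph n) k j :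
  reflect (exists b, kg_tgt G (k, b) = inl j) (aerial_edge G k j).
Proof.
rewrite /aerial_edge; apply: (iffP orP) => [[/eqP h|/eqP h]|[[] h]].
- by exists false.
- by exists true.
- by right; rewrite h.
- by left; rewrite h.
Qed.

Definition indeg1 n (G : kgraph n) :=
  forall e1 e2 j, kg_tgt G e1 = inl j -> kg_tgt G e2 = inl j -> e1 = e2.
Definition acyc n (G : kgraph n) :=
  forall k j, aerial_edge G k j -> ~~ connect (aerial_edge G) j k.

Lemma par_uniq n (G : kgraph n) : indeg1 G ->
  forall p1 p2 j, aerial_edge G p1 j -> aerial_edge G p2 j -> p1 = p2.
Proof.
move=> Hin p1 p2 j /edgeP[b1 h1] /edgeP[b2 h2].
by case: (Hin _ _ _ h1 h2).
Qed.

Lemma last_step n (G : kgraph n) a b : connect (aerial_edge G) a b -> a != b ->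
  exists2 p, connect (aerial_edge G) a p & aerial_edge G p b.
Proof.
move=> /connectP[q]; elim/last_ind: q => [|q y _] /=.
  by move=> _ ->; rewrite eqxx.
rewrite rcons_path last_rcons => /andP[pq ey] -> _.
by exists (last a q) => //; apply/connectP; exists q.
Qed.

Lemma comparable n (G : kgraph n) : indeg1 G -> forall a b x,
  connect (aerial_edge G) a x -> connect (aerial_edge G) b x ->
  connect (aerial_edge G) a b || connect (aerial_edge G) b a.
Proof.
move=> Hin a b x /connectP[q]; elim/last_ind: q x => [|q y IH] x /=.
  by move=> _ -> ->; rewrite orbT.
rewrite rcons_path last_rcons => /andP[pq ey] -> hb.
case: (eqVneq b y) => [->|nby].
  apply/orP; left; apply/connectP; exists (rcons q y) => //.
  - by rewrite rcons_path pq ey.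
  - by rewrite last_rcons.
have [p hbp epy] := last_step hb nby.
rewrite (par_uniq Hin epy ey) in hbp.
exact: (IH (last a q) pq erefl hbp).
Qed.

Lemma children_eq n (G : kgraph n) : indeg1 G -> acyc G -> forall k a b,
  aerial_edge G k a -> aerial_edge G k b -> connect (aerial_edge G) a b -> a = b.
Proof.
move=> Hin Hac k a b ka kb ab; case: (eqVneq a b) => // nab.
have [p ap pb] := last_step ab nab.
rewrite (par_uniq Hin pb kb) in ap.
by have := Hac _ _ ka; rewrite ap.
Qed.

Definition mu n (G : kgraph n) (k : 'I_n) := #|[pred y | connect (aerial_edge G) k y]|.

Lemma mu_lt n (G : kgraph n) : acyc G -> forall k j, aerial_edge G k j -> (mu G j < mu G k)%N.
Proof.
move=> Hac k j kj; apply: proper_card; apply/properP; split.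
  apply/subsetP => y; rewrite !inE => jy; exact: connect_trans (connect1 kj) jy.
by exists k; rewrite !inE ?connect0 //; apply: Hac.
Qed.

Fixpoint build n (G : kgraph n) (f : nat) (k : 'I_n) : btree n :=
  match f with
  | 0 => @BLeaf n false
  | f'.+1 =>
    let ch v := match v with inl j => build G f' j | inr b => @BLeaf n b end in
    BNode k (ch (kg_tgt G (k, false))) (ch (kg_tgt G (k, true)))
  end.

Definition child n (G : kgraph n) f (v : kvertex n) :=
  match v with inl j => build G f j | inr b => @BLeaf n b end.

Lemma build_S n (G : kgraph n) f k :
  build G f.+1 k = BNode k (child G f (kg_tgt G (k, false))) (child G f (kg_tgt G (k, true))).
Proof. by []. Qed.

Lemma fits_build n (G : kgraph n) : acyc G -> forall f k, (mu G k < f)%N ->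
  btree_fits G (build G f k).
Proof.
move=> Hac; elim=> [|f IH] k hk //.
rewrite build_S /=.
have H : forall b, (kg_tgt G (k, b) == btree_root (child G f (kg_tgt G (k, b))))
    && btree_fits G (child G f (kg_tgt G (k, b))).
  move=> b; case E: (kg_tgt G (k, b)) => [j|b'] /=; last by rewrite eqxx.
  have kj : aerial_edge G k j by apply/edgeP; exists b.
  have hj : (mu G j < f)%N by have := mu_lt Hac kj; rewrite ltnS in hk; lia.
  move: IH hj; case: f {hk} => // f IH hj.
  have -> : btree_root (build G f.+1 j) = inl j by [].
  by rewrite eqxx IH.
have /andP[h1 h2] := H false; have /andP[h3 h4] := H true.
by rewrite h1 h2 h3 h4.
Qed.

Definition hit n (G : kgraph n) (v : kvertex n) x :=
  match v with inl j => connect (aerial_edge G) j x | inr _ => false end.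

Lemma hit_conn n (G : kgraph n) k b x :
  hit G (kg_tgt G (k, b)) x -> connect (aerial_edge G) k x.
Proof.
case E: (kg_tgt G (k, b)) => [j|] //= jx.
have kj : aerial_edge G k j by apply/edgeP; exists b.
exact: connect_trans (connect1 kj) jx.
Qed.

Lemma count_build n (G : kgraph n) : indeg1 G -> acyc G -> forall f k x,
  (mu G k < f)%N ->
  count_mem x (btree_nodes (build G f k)) = connect (aerial_edge G) k x.
Proof.
move=> Hin Hac; elim=> [|f IH] k x hk //.
rewrite build_S /= count_cat.
have C : forall b, count_mem x (btree_nodes (child G f (kg_tgt G (k, b))))
    = hit G (kg_tgt G (k, b)) x.
  move=> b; case E: (kg_tgt G (k, b)) => [j|b'] //=.
  have kj : aerial_edge G k j by apply/edgeP; exists b.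
  have hj : (mu G j < f)%N by have := mu_lt Hac kj; rewrite ltnS in hk; lia.
  exact: IH.
rewrite !C.
case: (eqVneq k x) => [<-|nkx].
  rewrite connect0.
  have N : forall b, hit G (kg_tgt G (k, b)) k = false.
    move=> b; case E: (kg_tgt G (k, b)) => [j|] //=.
    have kj : aerial_edge G k j by apply/edgeP; exists b.
    exact/negbTE/Hac.
  by rewrite !N.
have excl : ~~ (hit G (kg_tgt G (k, false)) x && hit G (kg_tgt G (k, true)) x).
  case E1: (kg_tgt G (k, false)) => [j1|] //=.
  case E2: (kg_tgt G (k, true)) => [j2|] /=; last by rewrite andbF.
  apply/negP => /andP[h1 h2].
  have k1 : aerial_edge G k j1 by apply/edgeP; exists false.
  have k2 : aerial_edge G k j2 by apply/edgeP; exists true.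
  have E12 : j1 = j2.
    case/orP: (comparable Hin h1 h2) => h.
    - exact: (children_eq Hin Hac k1 k2 h).
    - by apply/esym; exact: (children_eq Hin Hac k2 k1 h).
  by rewrite -E12 in E2; have := Hin _ _ _ E1 E2.
have cover : connect (aerial_edge G) k x =
    hit G (kg_tgt G (k, false)) x || hit G (kg_tgt G (k, true)) x.
  apply/idP/idP; last by case/orP; apply: hit_conn.
  case/connectP => -[|y q] /=; first by move=> _ E; rewrite E eqxx in nkx.
  case/andP => /edgeP[b Eb] pq Ex.
  have hy : hit G (kg_tgt G (k, b)) x by rewrite Eb /=; apply/connectP; exists q.
  by case: b Eb hy => _ ->; rewrite ?orbT.

rewrite cover; move: excl.
by case: (hit G _ x); case: (hit G _ x).
Qed.

Definition isroot n (G : kgraph n) r := [forall k, ~~ aerial_edge G k r].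

Lemma exist_root n (G : kgraph n) : acyc G -> forall x,
  exists r, isroot G r && connect (aerial_edge G) r x.
Proof.
move=> Hac x.
have Ax : x \in [pred y | connect (aerial_edge G) y x] by rewrite inE connect0.
case: (arg_maxnP (mu G) Ax) => r Ar0 rmax; exists r.
have Ar : connect (aerial_edge G) r x := Ar0.
rewrite Ar andbT; apply/forallP => k; apply/negP => kr.
have := rmax k (connect_trans (connect1 kr) Ar).
by have := mu_lt Hac kr; lia.
Qed.

Lemma uniq_root n (G : kgraph n) : indeg1 G -> forall r1 r2 x,
  isroot G r1 -> isroot G r2 -> connect (aerial_edge G) r1 x ->
  connect (aerial_edge G) r2 x -> r1 = r2.
Proof.
move=> Hin r1 r2 x h1 h2 c1 c2.
have key : forall a b, isroot G b -> connect (aerial_edge G) a b -> a = b.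
  move=> a b hb ab; case: (eqVneq a b) => // nab.
  have [p _ pb] := last_step ab nab.
  by move/forallP: hb => /(_ p); rewrite pb.
case/orP: (comparable Hin c1 c2) => h.
- exact: key.
- by apply/esym; exact: key.
Qed.

Lemma sym_adm n (G : kgraph n) : indeg1 G -> acyc G -> sym_admissible G.
Proof.
move=> Hin Hac; right.
have hmu : forall k, (mu G k < n.+1)%N.
  by move=> k; rewrite ltnS /mu; have := max_card [pred y | connect (aerial_edge G) k y]; rewrite card_ord.
exists (map (build G n.+1) (filter (isroot G) (enum 'I_n))); split.
- by rewrite all_map; apply/allP.
- set s := flatten _.
  have hc : forall x, count_mem x s = 1%N.
    move=> x; rewrite /s count_flatten -!map_comp.
    rewrite (eq_map (g := fun r => nat_of_bool (connect (aerial_edge G) r x))); last first.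
      by move=> r /=; exact: (count_build Hin Hac x (hmu r)).
    rewrite sumn_count count_filter.
    have [r0 /andP[hr0 cr0]] := exist_root Hac x.
    rewrite (@eq_count _ _ (pred1 r0)) ?count_uniq_mem ?enum_uniq ?mem_enum //.
    move=> r /=; apply/andP/eqP => [[c hr]|->]; last by rewrite cr0 hr0.
    exact: (uniq_root Hin hr hr0 c cr0).
  have hin : forall x, x \in s.
    by move=> x; apply: contraT => /count_memPn; rewrite hc.
  apply: uniq_perm; last by move=> x; rewrite hin mem_enum.
  - by apply: count_mem_uniq => x; rewrite hc hin.
  - exact: enum_uniq.
- rewrite all_map; apply/allP => r _ /=; exact: (fits_build Hac (hmu r)).
Qed.

Import Order.TTheory GRing.Theory Num.Theory.
Local Open Scope ring_scope.
Lemma derivs_comm (R : realType) (d : nat) (s : seq 'I_d) (a : 'I_d) (p : {mpoly R[d]}) :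
  derivs s (mderiv a p) = mderiv a (derivs s p).
Proof. by elim: s => //= i s ->; rewrite mderiv_comm. Qed.

Lemma derivs0 (R : realType) (d : nat) (s : seq 'I_d) :
  derivs s (0 : {mpoly R[d]}) = 0.
Proof. by elim: s => //= i s ->; rewrite mderiv0. Qed.

Lemma dd_alpha (R : realType) (d : nat) (c : 'I_d -> 'I_d -> 'I_d -> R) i j a b :
  mderiv b (mderiv a (alpha_bar c i j)) = 0.
Proof.
have hX : forall k, mderiv b (mderiv a ('X_k : {mpoly R[d]})) = 0.
  move=> k; rewrite mderivX mderivZ mderivX scalerA mnmBE !mnm1E.
  case: (eqVneq k a) => [->|nka]; first by rewrite subnn mulr0 scale0r.
  by rewrite mul0r scale0r.
have hZ : forall k (x : R), mderiv b (mderiv a (x *: ('X_k : {mpoly R[d]}))) = 0.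
  by move=> k x; rewrite !mderivZ hX scaler0.
rewrite /alpha_bar !mderivZ (raddf_sum (mderiv a)) (raddf_sum (mderiv b)).
rewrite big1 ?scaler0 // => k _.
exact: hZ.
Qed.

Lemma derivs_alpha2 (R : realType) (d : nat) (c : 'I_d -> 'I_d -> 'I_d -> R) i j s :
  (2 <= size s)%N -> derivs s (alpha_bar c i j) = 0.
Proof.
case: s => [|a [|b s]] //= _.
by rewrite -!derivs_comm dd_alpha derivs0.
Qed.

Theorem proposition5p1p2 (R : realType) (d : nat)
    (c : 'I_d -> 'I_d -> 'I_d -> R) (n : nat) (G : kgraph n) :
  is_lie_structure c ->
  (exists f g : {mpoly R[d]}, B_op c G f g != 0) ->
  loop_graph G \/ sym_admissible G.
Proof.
move=> _ [f [g nz]].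
have Hin : indeg1 G.
  move=> e1 e2 j h1 h2; case: (eqVneq e1 e2) => // ne; exfalso.
  move/negP: nz; apply; apply/eqP.
  have hs : (2 <= size (edges_into G (inl j)))%N.
    have := @uniq_leq_size _ [:: e1; e2] (edges_into G (inl j)).
    rewrite /= inE ne => -> //.
    move=> y; rewrite !inE => /orP[/eqP->|/eqP->];
      by rewrite /edges_into mem_filter mem_enum ?h1 ?h2 eqxx.
  rewrite /B_op big1 // => I _.
  rewrite (bigD1 j) //= derivs_alpha2 ?mul0r //.
  by rewrite size_map.
case: (boolP [exists k, exists j, aerial_edge G k j && connect (aerial_edge G) j k]).
  by move=> /existsP[k /existsP[j h]]; left; exists k, j.
move=> hn; right; apply: sym_adm => // k j kj; apply/negP => jk.
move/negP: hn; apply; apply/existsP; exists k; apply/existsP; exists j.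
by rewrite kj jk.
Qed.
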